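(* Let $G$ be a simple graph with $n$ vertices and $m$ edges, and let $\hat{G}$ be a $1$-regular conflict graph on $E(G)$. If $m<2n$, then there exists a vertex $v$ of $G$ such that $\partial_G v$ is conflict-free, i.e. independent in $\hat{G}$.
   Context: A conflict graph on $E(G)$ is a graph $\hat{G}$ with $V(\hat{G})=E(G)$; two edges are conflicting if they are adjacent in $\hat{G}$, and a set of edges is conflict-free if it is independent in $\hat{G}$. For a vertex $v$, $\partial_G v$ denotes the set of edges of $G$ incident with $v$. *)

(* Defs.v *)
From mathcomp Require Import all_boot.
Set Implicit Arguments. Unset Strict Implicit. Unset Printing Implicit Defensive.

Definition simple_graph (T : finType) (adj : rel T) : Prop :=
  irreflexive adj /\ symmetric adj.

Definition edges (T : finType) (adj : rel T) : {set {set T}} :=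
  [set A : {set T} | [exists x, exists y, adj x y && (A == [set x; y])]].

Definition incident (T : finType) (adj : rel T) (v : T) : {set {set T}} :=
  [set A in edges adj | v \in A].

Definition conflict_graph (T : finType) (adj : rel T) (conf : rel {set T}) : Prop :=
  (forall A B, conf A B -> (A \in edges adj) && (B \in edges adj)) /\
  (forall A, ~~ conf A A) /\ (forall A B, conf A B = conf B A).

Definition regular_conflict (T : finType) (adj : rel T) (conf : rel {set T}) (k : nat) : Prop :=
  forall A, A \in edges adj -> #|[set B in edges adj | conf A B]| = k.

Definition conflict_free (T : finType) (conf : rel {set T}) (S : {set {set T}}) : Prop :=
  forall A B, A \in S -> B \in S -> ~~ conf A B.

(* Main.v *)
Require Import Defs.
From mathcomp Require Import all_boot.

Lemma edge2 (T : finType) (adj : rel T) A :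
  A \in edges adj -> #|A| <= 2.
Proof.
rewrite inE => /existsP[x /existsP[y /andP[_ /eqP->]]].
by rewrite cards2; case: (x != y).
Qed.

Lemma inter_le1 (T : finType) (A B : {set T}) v w :
  #|A| <= 2 -> #|B| <= 2 -> A != B -> v \in A -> w \in A -> v \in B -> w \in B -> v = w.
Proof.
move=> hA hB nAB vA wA vB wB; apply/eqP; apply/negPn/negP => nvw.
have sA : [set v; w] \subset A by apply/subsetP => z; rewrite !inE => /orP[]/eqP->.
have sB : [set v; w] \subset B by apply/subsetP => z; rewrite !inE => /orP[]/eqP->.
have c2 : #|[set v; w]| = 2 by rewrite cards2 nvw.
have eA : [set v; w] == A by rewrite eqEcard sA c2.
have eB : [set v; w] == B by rewrite eqEcard sB c2.
by move: nAB; rewrite -(eqP eA) -(eqP eB) eqxx.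
Qed.

Theorem proposition9 (T : finType) (adj : rel T) (conf : rel {set T}) :
  simple_graph adj ->
  conflict_graph adj conf ->
  regular_conflict adj conf 1 ->
  #|edges adj| < 2 * #|T| ->
  exists v : T, conflict_free conf (incident adj v).
Proof.
move=> _ [cE [cirr csym]] reg hm.
have uniq : forall A B C, conf A B -> conf A C -> B = C.
  move=> A B C hB hC.
  have AE : A \in edges adj by case/andP: (cE _ _ hB).
  have [D hD] := cards1P (introT eqP (reg A AE)).
  have : B \in [set D] by rewrite -hD inE hB andbT; case/andP: (cE _ _ hB).
  have : C \in [set D] by rewrite -hD inE hC andbT; case/andP: (cE _ _ hC).
  by rewrite !inE => /eqP-> /eqP->.
have swap : forall A B E, conf A B -> E \in [set A; B] ->
    exists F, conf E F /\ [set A; B] = [set E; F].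
  move=> A B E hAB; rewrite !inE => /orP[]/eqP->.
    by exists B.
  by exists A; rewrite csym setUC.
pose bad v := [exists AB : {set T} * {set T},
   [&& AB.1 \in incident adj v, AB.2 \in incident adj v & conf AB.1 AB.2]].
case: (boolP [exists v, ~~ bad v]) => [/existsP[v hv]|].
  exists v => A B hA hB; apply/negP => hc; move/negP: hv; apply.
  by apply/existsP; exists (A, B); rewrite /= hA hB hc.
rewrite negb_exists => /forallP allbad; exfalso.
pose g v := if [pick AB : {set T} * {set T} |
   [&& AB.1 \in incident adj v, AB.2 \in incident adj v & conf AB.1 AB.2]]
   is Some AB then [set AB.1; AB.2] else set0.
have gP : forall v, exists A B, [/\ A \in incident adj v, B \in incident adj v,
      conf A B & g v = [set A; B]].
  move=> v; rewrite /g; case: pickP => [[A B] /and3P[h1 h2 h3]|h0].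
    by exists A, B.
  by move: (allbad v); rewrite negbK => /existsP[AB]; rewrite h0.
have ginj : injective g.
  move=> v w e.
  have [A [B [hA hB hAB gv]]] := gP v.
  have [C [D [hC hD hCD gw]]] := gP w.
  have Ain : A \in [set C; D] by rewrite -gw -e gv !inE eqxx.
  have Bin : B \in [set C; D] by rewrite -gw -e gv !inE eqxx orbT.
  have wC : w \in C by move: hC; rewrite inE => /andP[].
  have wD : w \in D by move: hD; rewrite inE => /andP[].
  have wA : w \in A by move: Ain; rewrite !inE => /orP[]/eqP->.
  have wB : w \in B by move: Bin; rewrite !inE => /orP[]/eqP->.
  case/setIdP: hA => AE vA; case/setIdP: hB => BE vB.
  apply: (@inter_le1 T A B v w (@edge2 T adj A AE) (@edge2 T adj B BE) _ vA wA vB wB).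
  by apply/negP => /eqP eAB; move: hAB; rewrite eAB (negbTE (cirr B)).
pose P := g @: T.
have cardP : #|P| = #|T| by rewrite card_imset.
have triv : trivIset P.
  apply/trivIsetP => S1 S2 /imsetP[v _ ->] /imsetP[w _ ->] ne.
  apply/pred0P => E /=; apply/negP => /andP[E1 E2].
  move/negP: ne; apply; apply/eqP.
  have [A [B [_ _ hAB gv]]] := gP v.
  have [C [D [_ _ hCD gw]]] := gP w.
  rewrite gv gw in E1 E2 *.
  have [F1 [h1 ->]] := swap _ _ _ hAB E1.
  have [F2 [h2 ->]] := swap _ _ _ hCD E2.
  by rewrite (uniq _ _ _ h1 h2).
have sz : forall S, S \in P -> #|S| = 2.
  move=> S /imsetP[v _ ->].
  have [A [B [_ _ hAB ->]]] := gP v.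
  rewrite cards2; case: eqP => // eAB.
  by move: hAB; rewrite eAB (negbTE (cirr B)).
have cov : cover P \subset edges adj.
  apply/subsetP => E /bigcupP[S /imsetP[v _ ->]].
  have [A [B [hA hB _ ->]]] := gP v.
  case/set2P => ->.
    by case/setIdP: hA.
  by case/setIdP: hB.
have : #|cover P| = 2 * #|T|.
  rewrite -(eqP triv) -cardP (eq_bigr (fun _ => 2)); last by move=> S /sz.
  by rewrite sum_nat_const mulnC.
move: (subset_leq_card cov) => h1 h2.
by move: hm; rewrite -h2 ltnNge h1.
Qed.
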